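(* For all integers $1\le r\le n$, $m(n,r)\le m(n,r-1)\,p(n,r)$.
   Context: $m(n,r)$ denotes the number of matroids of rank $r$ on the ground set $[n]=\{1,\dots,n\}$, and $p(n,r)$ the number of paving matroids of rank $r$ on $[n]$ (rank-$r$ matroids all of whose circuits have at least $r$ elements). *)

(* Defs.v *)
(* A matroid on the ground set [n] is represented by its
   family of bases, a set of subsets of 'I_n (the ordinals 0..n-1 stand for
   the elements 1..n). *)
From mathcomp Require Import all_boot.
Set Implicit Arguments. Unset Strict Implicit. Unset Printing Implicit Defensive.

Definition is_matroid_bases (n : nat) (B : {set {set 'I_n}}) : bool :=
  (B != set0) &&
  [forall B1 in B, forall B2 in B, forall x in B1 :\: B2,
     exists y in B2 :\: B1, (y |: (B1 :\ x)) \in B].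

Definition has_rank (n : nat) (B : {set {set 'I_n}}) (r : nat) : bool :=
  [forall X in B, #|X| == r].

Definition indep (n : nat) (B : {set {set 'I_n}}) (I : {set 'I_n}) : bool :=
  [exists X in B, I \subset X].

Definition circuit (n : nat) (B : {set {set 'I_n}}) (C : {set 'I_n}) : bool :=
  ~~ indep B C && [forall D : {set 'I_n}, (D \proper C) ==> indep B D].

Definition paving (n : nat) (B : {set {set 'I_n}}) (r : nat) : bool :=
  [forall C : {set 'I_n}, circuit B C ==> (r <= #|C|)].

Definition m_count (n r : nat) : nat :=
  #|[set B : {set {set 'I_n}} | is_matroid_bases B && has_rank B r]|.

Definition p_count (n r : nat) : nat :=
  #|[set B : {set {set 'I_n}} | [&& is_matroid_bases B, has_rank B r & paving B r]]|.

(* Main.v *)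
Require Import Defs.
From mathcomp Require Import all_boot zify.
Set Implicit Arguments. Unset Strict Implicit. Unset Printing Implicit Defensive.

Section Basics.
Variables (n r : nat) (Bs : {set {set 'I_n}}).
Hypotheses (HM : is_matroid_bases Bs) (HR : has_rank Bs r).

Lemma exch (X1 X2 : {set 'I_n}) x : X1 \in Bs -> X2 \in Bs -> x \in X1 :\: X2 ->
  exists2 y, y \in X2 :\: X1 & y |: (X1 :\ x) \in Bs.
Proof.
move: HM => /andP[_ /forall_inP H] h1 h2 hx.
have /forall_inP H2 := H _ h1. have /forall_inP H3 := H2 _ h2.
have /exists_inP[y hy hb] := H3 _ hx. by exists y.
Qed.

Lemma cardB (X : {set 'I_n}) : X \in Bs -> #|X| = r.
Proof. by move: HR => /forall_inP H /H /eqP. Qed.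

Lemma indep_sub (I J : {set 'I_n}) : indep Bs I -> J \subset I -> indep Bs J.
Proof.
move=> /exists_inP[X hX hI] hJ; apply/exists_inP; exists X => //.
exact: subset_trans hJ hI.
Qed.

Lemma indep_card (I : {set 'I_n}) : indep Bs I -> #|I| <= r.
Proof. move=> /exists_inP[X hX hI]; rewrite -(cardB hX); exact: subset_leq_card. Qed.

Lemma indep_r (I : {set 'I_n}) : indep Bs I -> #|I| = r -> I \in Bs.
Proof.
move=> /exists_inP[X hX hI] hc.
have : I == X by rewrite eqEcard hI (cardB hX) hc leqnn.
by move/eqP ->.
Qed.

Lemma B_indep (X : {set 'I_n}) : X \in Bs -> indep Bs X.
Proof. by move=> h; apply/exists_inP; exists X. Qed.

Lemma augment (I J : {set 'I_n}) : indep Bs I -> indep Bs J -> #|I| < #|J| ->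
  exists2 e, e \in J :\: I & indep Bs (e |: I).
Proof.
move=> /exists_inP[BI hBI hI] /exists_inP[BJ0 hBJ0 hJ] hlt.
have step1 : forall k BJ, BJ \in Bs -> J \subset BJ ->
   #|BJ :\: (J :|: BI)| <= k ->
   exists2 B', B' \in Bs & (J \subset B') && (B' \subset J :|: BI).
  elim=> [|k IH] BJ hB hJB hk.
    exists BJ => //; rewrite hJB /=; rewrite -setD_eq0 -cards_eq0.
    by rewrite -leqn0.
  case: (boolP (BJ :\: (J :|: BI) == set0)) => [h0|].
    by exists BJ => //; rewrite hJB /= -setD_eq0.
  case/set0Pn => x hx.
  have hx' : x \in BJ :\: BI by move: hx; rewrite !inE => /andP[/norP[_ ->] ->].
  have [y hy hyB] := exch hB hBI hx'.
  apply: (IH (y |: (BJ :\ x))) => //.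
    apply/subsetP => z hz; rewrite !inE.
    have hzx : z != x.
      by apply/eqP => e; move: hx; rewrite !inE -e hz.
    by rewrite hzx (subsetP hJB z hz) orbT.
  rewrite -ltnS; apply: leq_trans hk; apply: proper_card.
  apply/properP; split.
    apply/subsetP => z; rewrite !inE.
    case/andP => /norP[hzJ hzBI] /orP[/eqP zy|/andP[_ hzB]]; last by rewrite (negbTE hzJ) (negbTE hzBI) hzB.
    by move: hy hzBI; rewrite !inE zy => /andP[_ ->].
  have hxy : (x == y) = false.
    apply/negbTE/eqP => xy; move: hx' hy; rewrite xy !inE => /andP[h1 _] /andP[_ h4].
    by rewrite h4 in h1.
  exists x => //; rewrite !inE eqxx hxy /= andbF.
  by [].
have [BJ hBJ /andP[hJB hBJU]] := step1 _ BJ0 hBJ0 hJ (leqnn _).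
case: (boolP [exists e, (e \in J :\: I) && indep Bs (e |: I)]).
  by move/existsP => [e /andP[h1 h2]]; exists e.
move=> hno; exfalso; move: hno => /negP; apply.
case: (boolP (BI :\: (I :|: BJ) == set0)) => [h0|]; last first.
  case/set0Pn => x hx.
  have hx' : x \in BI :\: BJ by move: hx; rewrite !inE => /andP[/norP[_ ->] ->].
  have hxI : x \notin I by move: hx; rewrite !inE => /andP[/norP[-> _] _].
  have [y hy hyB] := exch hBI hBJ hx'.
  move: hy; rewrite !inE => /andP[hyBI hyBJ].
  have hyJ : y \in J by move: (subsetP hBJU y hyBJ); rewrite !inE (negbTE hyBI) orbF.
  apply/existsP; exists y; rewrite !inE hyJ andbT.
  have -> : (y \notin I) by apply: contra hyBI => /(subsetP hI).
  apply/exists_inP; exists (y |: (BI :\ x)) => //.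
  apply/subsetP => z; rewrite !inE => /orP[->//|hz].
  rewrite (subsetP hI z hz) andbT orbC /=; apply/orP; left.
  by apply: contra hxI => /eqP <-.
move: h0; rewrite setD_eq0 => hBIU.
case: (boolP [exists e, (e \in J :\: I) && (e \in BI)]).
  move/existsP => [e /andP[he heB]]; apply/existsP; exists e; rewrite he /=.
  apply/exists_inP; exists BI => //; apply/subsetP => z; rewrite !inE.
  by case/orP => [/eqP->//|/(subsetP hI)].
move=> hno; exfalso.
have s1 : J :\: I \subset BJ :\: BI.
  apply/subsetP => z hz; rewrite inE (subsetP hJB z); last by move: hz; rewrite inE => /andP[].
  rewrite andbT; apply/negP => hzB; move/negP: hno; apply; apply/existsP; exists z.
  by rewrite hz hzB.
have s2 : BI :\: BJ \subset I :\: J.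
  apply/subsetP => z; rewrite !inE => /andP[hzBJ hzBI].
  move: (subsetP hBIU z hzBI); rewrite !inE (negbTE hzBJ) orbF => ->.
  by rewrite andbT; apply: contra hzBJ => /(subsetP hJB).
have c1 := subset_leq_card s1. have c2 := subset_leq_card s2.
have e1 : #|BJ :\: BI| = #|BI :\: BJ|.
  by rewrite !cardsD (cardB hBI) (cardB hBJ) setIC.
have h1 := cardsID I J. have h2 := cardsID J I. rewrite setIC in h2.
clear -h1 h2 c1 c2 e1 hlt. lia.
Qed.



Lemma indep0 : indep Bs set0.
Proof.
move: HM => /andP[/set0Pn[X hX] _]; apply/exists_inP; exists X => //; exact: sub0set.
Qed.

End Basics.

Lemma ext (T : finType) (J X : {set T}) k : J \subset X -> #|J| <= k <= #|X| ->
  exists2 Y : {set T}, (J \subset Y) && (Y \subset X) & #|Y| = k.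
Proof.
move=> hJX /andP[h1 h2].
have main : forall d (J' : {set T}), J' \subset X -> #|J'| <= k -> k - #|J'| = d ->
  exists2 Y : {set T}, (J' \subset Y) && (Y \subset X) & #|Y| = k.
  elim=> [|d IH] J' hJ h1' hd.
    by exists J'; [rewrite subxx hJ | lia].
  have : J' \proper X by rewrite properEcard hJ; lia.
  case/properP => _ [x hxX hxJ].
  have [Y /andP[hY1 hY2] hY3] : exists2 Y : {set T}, (x |: J' \subset Y) && (Y \subset X) & #|Y| = k.
    apply: IH.
    - by rewrite subUset sub1set hxX hJ.
    - rewrite cardsU1 hxJ /=; lia.
    - rewrite cardsU1 hxJ /=; lia.
  exists Y => //; rewrite hY2 andbT; apply: subset_trans hY1; exact: subsetUr.
exact: (main _ J hJX h1 erefl).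
Qed.

Definition trunc n (Bs : {set {set 'I_n}}) r :=
  [set X : {set 'I_n} | indep Bs X && (#|X| == r.-1)].
Definition hcl n (Bs : {set {set 'I_n}}) (S : {set 'I_n}) :=
  [set e | (e \in S) || ~~ indep Bs (e |: S)].
Definition general n (Bs : {set {set 'I_n}}) r (G : {set 'I_n}) :=
  [forall J : {set 'I_n}, (J \subset G) ==> (#|J| <= r.-1) ==> indep Bs J].
Definition gmax n (Bs : {set {set 'I_n}}) r (H : {set 'I_n}) :=
  \max_(G : {set 'I_n} | general Bs r G && (G \subset H)) #|G|.
Definition beta n (Bs : {set {set 'I_n}}) r (H : {set 'I_n}) :=
  odflt set0 [pick G : {set 'I_n} | [&& general Bs r G, G \subset H & #|G| == gmax Bs r H]].
Definition block n (Bs : {set {set 'I_n}}) r (K : {set 'I_n}) :=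
  [exists S : {set 'I_n}, [&& indep Bs S, #|S| == r.-1 & K == beta Bs r (hcl Bs S)]].
Definition pav n (Bs : {set {set 'I_n}}) r :=
  [set X : {set 'I_n} | (#|X| == r) && [forall K, block Bs r K ==> ~~ (X \subset K)]].

Section Mat.
Variables (n r : nat) (Bs : {set {set 'I_n}}).
Hypotheses (HM : is_matroid_bases Bs) (HR : has_rank Bs r) (Hr : 0 < r) (Hrn : r <= n).
Implicit Types (S X K G J H : {set 'I_n}).

Lemma general_indep (G J : {set 'I_n}) : general Bs r G -> J \subset G -> #|J| <= r.-1 -> indep Bs J.
Proof. by move=> /forallP /(_ J) /implyP H /H /implyP. Qed.

Lemma beta_spec H : [/\ general Bs r (beta Bs r H), beta Bs r H \subset H &
  forall G, general Bs r G -> G \subset H -> #|G| <= #|beta Bs r H|].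
Proof.
rewrite /beta; case: pickP => [G /and3P[g s /eqP c]|hno] /=.
  split=> // G' g' s'; rewrite c /gmax; apply: (@leq_bigmax_cond _ (fun G => general Bs r G && (G \subset H)) (fun G => #|G|) G').
  by rewrite g' s'.
exfalso.
have hg0 : general Bs r set0.
  apply/forallP => J; apply/implyP => hJ; apply/implyP => _.
  exact: (indep_sub (indep0 HM)).
have hA : 0 < #|[pred G : {set 'I_n} | general Bs r G && (G \subset H)]|.
  by apply/card_gt0P; exists set0; rewrite inE hg0 sub0set.
have [G0 hG0 hmax] := eq_bigmax_cond (fun G : {set 'I_n} => #|G|) hA.
move: (hno G0); rewrite inE in hG0; case/andP: hG0 => g0 s0.
have -> : gmax Bs r H = #|G0| by rewrite -hmax.
by rewrite g0 s0 eqxx.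
Qed.



Lemma hcl_self S : S \subset hcl Bs S.
Proof. by apply/subsetP => e he; rewrite inE he. Qed.

Lemma hcl_dep S X : indep Bs S -> #|S| = r.-1 -> X \subset hcl Bs S -> #|X| = r ->
  ~~ indep Bs X.
Proof.
move=> hS hc hX hXc; apply/negP => hXi.
have [e he hei] := augment HM HR hS hXi (ltac:(lia)).
move: he; rewrite inE => /andP[heS heX].
by move: (subsetP hX e heX); rewrite inE (negbTE heS) /= hei.
Qed.

Lemma hcl_sub S (S' : {set 'I_n}) : indep Bs S -> #|S| = r.-1 -> #|S'| = r.-1 ->
  S' \subset hcl Bs S -> hcl Bs S \subset hcl Bs S'.
Proof.
move=> hS hc hc' hsub; apply/subsetP => e he; rewrite inE.
apply/negPn/negP => /norP[heS' /negPn hi].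
have [f hf hfi] := augment HM HR hS hi (ltac:(rewrite cardsU1 heS' hc' hc; lia)).
move: hf; rewrite inE => /andP[hfS]; rewrite in_setU1 => /orP[/eqP fe|hfS'].
  by rewrite -fe in he; rewrite inE (negbTE hfS) hfi in he.
by move: (subsetP hsub f hfS'); rewrite inE (negbTE hfS) hfi.
Qed.

Lemma hcl_eq S (S' : {set 'I_n}) : indep Bs S -> #|S| = r.-1 -> indep Bs S' -> #|S'| = r.-1 ->
  S' \subset hcl Bs S -> hcl Bs S' = hcl Bs S.
Proof.
move=> hS hc hS' hc' hsub.
have h1 := hcl_sub hS hc hc' hsub.
apply/eqP; rewrite eqEsubset h1 andbT.
apply: hcl_sub => //; exact: subset_trans (hcl_self S) h1.
Qed.

Lemma block_hcl K : block Bs r K ->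
  exists2 S, indep Bs S && (#|S| == r.-1) & K \subset hcl Bs S.
Proof.
move=> /existsP[S /and3P[hS hc /eqP e]]; exists S; first by rewrite hS hc.
by rewrite e; have [_ s _] := beta_spec (hcl Bs S).
Qed.

Lemma block_uniq (K1 K2 S0 : {set 'I_n}) : block Bs r K1 -> block Bs r K2 ->
  S0 \subset K1 -> S0 \subset K2 -> #|S0| = r.-1 -> K1 = K2.
Proof.
move=> /existsP[S1 /and3P[hS1 /eqP hc1 /eqP e1]] /existsP[S2 /and3P[hS2 /eqP hc2 /eqP e2]] h1 h2 hc.
have [g1 s1 _] := beta_spec (hcl Bs S1).
have [g2 s2 _] := beta_spec (hcl Bs S2).
have hS0 : indep Bs S0 by apply: (general_indep g1); [rewrite -e1 | rewrite hc].
have E1 : hcl Bs S0 = hcl Bs S1.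
  apply: hcl_eq => //; apply: subset_trans s1; by rewrite -e1.
have E2 : hcl Bs S0 = hcl Bs S2.
  apply: hcl_eq => //; apply: subset_trans s2; by rewrite -e2.
by rewrite e1 e2 -E1 -E2.
Qed.

Lemma B_pav X : X \in Bs -> X \in pav Bs r.
Proof.
move=> hX; rewrite inE (cardB HR hX) eqxx /=; apply/forallP => K; apply/implyP => hK.
apply/negP => hXK; have [S /andP[hS /eqP hc] hKS] := block_hcl hK.
have := hcl_dep hS hc (subset_trans hXK hKS) (cardB HR hX).
by rewrite (B_indep hX).
Qed.

Lemma notpav X : #|X| = r -> X \notin pav Bs r -> exists2 K, block Bs r K & X \subset K.
Proof.
move=> hX; rewrite inE hX eqxx /= => /forallPn[K]; rewrite negb_imply negbK => /andP[hK hXK].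
by exists K.
Qed.

Lemma pav_intro X : #|X| = r -> (forall K, block Bs r K -> X \subset K -> False) ->
  X \in pav Bs r.
Proof.
move=> hX H; rewrite inE hX eqxx /=; apply/forallP => K; apply/implyP => hK.
by apply/negP => /(H K hK).
Qed.



Lemma pav_rank : has_rank (pav Bs r) r.
Proof. by apply/forall_inP => X; rewrite inE => /andP[]. Qed.

Lemma pav_card X : X \in pav Bs r -> #|X| = r.
Proof. by rewrite inE => /andP[/eqP]. Qed.

Lemma pav_matroid : is_matroid_bases (pav Bs r).
Proof.
apply/andP; split.
  move: HM => /andP[/set0Pn[X hX] _]; apply/set0Pn; exists X; exact: B_pav.
apply/forall_inP => B1 h1; apply/forall_inP => B2 h2; apply/forall_inP => x hx.
have c1 := pav_card h1; have c2 := pav_card h2.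
have hxB1 : x \in B1 by move: hx; rewrite inE => /andP[].
have hxB2 : x \notin B2 by move: hx; rewrite inE => /andP[].
have cS : #|B1 :\ x| = r.-1 by move: (cardsD1 x B1); rewrite hxB1 c1; lia.
case: (boolP [exists y in B2 :\: B1, y |: (B1 :\ x) \in pav Bs r]) => // hno.
exfalso.
have hK : forall y, y \in B2 :\: B1 -> exists2 K, block Bs r K & y |: (B1 :\ x) \subset K.
  move=> y hy; apply: notpav.
    rewrite cardsU1 cS; have -> : y \notin B1 :\ x.
      by move: hy; rewrite !inE => /andP[hy _]; rewrite negb_and hy orbT.
    by rewrite add1n (prednK Hr).
  by apply: contra hno => hh; apply/exists_inP; exists y.
have : 0 < #|B2 :\: B1|.
  have e1 : #|B2 :\: B1| = #|B1 :\: B2| by rewrite !cardsD c1 c2 setIC.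
  by rewrite e1; apply/card_gt0P; exists x.
case/card_gt0P => y0 hy0.
have [K hKb hK0] := hK y0 hy0.
have hSK : B1 :\ x \subset K := subset_trans (subsetUr _ _) hK0.
have hB2K : B2 \subset K.
  apply/subsetP => z hz; case: (boolP (z \in B1)) => hzB1.
    apply: (subsetP hSK); rewrite !inE hzB1 andbT.
    by apply: contra hxB2 => /eqP <-.
  have hz' : z \in B2 :\: B1 by rewrite inE hzB1 hz.
  have [Kz hKz hzK] := hK z hz'.
  have -> : K = Kz.
    apply: (block_uniq hKb hKz hSK _ cS); exact: subset_trans (subsetUr _ _) hzK.
  by apply: (subsetP hzK); rewrite in_setU1 eqxx.
by move: h2; rewrite inE => /andP[_ /forallP /(_ K)]; rewrite hKb /= hB2K.
Qed.



Lemma small_indep (D : {set 'I_n}) : #|D| <= r.-1 -> indep (pav Bs r) D.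
Proof.
move=> hD.
have [S /andP[hDS _] hS] := ext (X:=setT) (k:=r.-1) (subsetT D)
  (ltac:(rewrite hD cardsT card_ord /=; lia)).
suff [e he] : exists e, (e |: S) \in pav Bs r.
  apply/exists_inP; exists (e |: S) => //; exact: subset_trans hDS (subsetUr _ _).
case: (boolP [exists K, block Bs r K && (S \subset K)]).
  move/existsP => [K /andP[hK hSK]].
  have [S1 /andP[hS1 /eqP hc1] hKS1] := block_hcl hK.
  move: HM => /andP[/set0Pn[X0 hX0] _].
  have : ~~ (X0 \subset hcl Bs S1).
    apply/negP => hsub; have := hcl_dep hS1 hc1 hsub (cardB HR hX0).
    by rewrite (B_indep hX0).
  case/subsetPn => e _ he.
  have heK : e \notin K by apply: contra he => /(subsetP hKS1).
  have heS : e \notin S by apply: contra heK => /(subsetP hSK).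
  exists e; apply: pav_intro; first by rewrite cardsU1 heS hS add1n (prednK Hr).
  move=> K' hK' hsub; have hSK' : S \subset K' := subset_trans (subsetUr _ _) hsub.
  have E := block_uniq hK hK' hSK hSK' hS.
  by move: heK; rewrite E; move/negP; apply; apply: (subsetP hsub); exact: setU11.
move=> hno.
have : S \proper setT by rewrite properEcard subsetT cardsT card_ord hS; lia.
case/properP => _ [e _ heS].
exists e; apply: pav_intro; first by rewrite cardsU1 heS hS add1n (prednK Hr).
move=> K hK hsub; move/negP: hno; apply; apply/existsP; exists K.
by rewrite hK; exact: subset_trans (subsetUr _ _) hsub.
Qed.

Lemma pav_paving : paving (pav Bs r) r.
Proof.
apply/forallP => C; apply/implyP => /andP[hC _]; rewrite leqNgt; apply/negP => hlt.
by move/negP: hC; apply; apply: small_indep; lia.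
Qed.

Lemma trunc_rank : has_rank (trunc Bs r) r.-1.
Proof. by apply/forall_inP => X; rewrite inE => /andP[]. Qed.

Lemma trunc_matroid : is_matroid_bases (trunc Bs r).
Proof.
apply/andP; split.
  move: HM => /andP[/set0Pn[X hX] _].
  have : 0 < #|X| by rewrite (cardB HR hX).
  case/card_gt0P => x hx; apply/set0Pn; exists (X :\ x).
  rewrite inE (indep_sub (B_indep hX) (subD1set X x)) /=; apply/eqP.
  move: (cardsD1 x X); by rewrite hx (cardB HR hX) add1n => ->.
apply/forall_inP => B1 h1; apply/forall_inP => B2 h2; apply/forall_inP => x hx.
move: h1 h2; rewrite !inE => /andP[i1 /eqP c1] /andP[i2 /eqP c2].
have hxB1 : x \in B1 by move: hx; rewrite inE => /andP[].
have hxB2 : x \notin B2 by move: hx; rewrite inE => /andP[].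
have cS := cardsD1 x B1; rewrite hxB1 add1n in cS.
have hlt : #|B1 :\ x| < #|B2| by rewrite c2 -c1 cS.
have [y hy hyi] := augment HM HR (indep_sub i1 (subD1set B1 x)) i2 hlt.
have hyx : y != x by apply: contra hxB2 => /eqP <-; move: hy; rewrite inE => /andP[].
have hyB1 : y \notin B1.
  by move: hy; rewrite !inE hyx /= => /andP[].
apply/exists_inP; exists y.
  by move: hy; rewrite !inE hyB1 => /andP[_ ->].
rewrite inE hyi /=; apply/eqP; rewrite cardsU1.
have -> : y \notin B1 :\ x by rewrite inE negb_and hyB1 orbT.
by rewrite add1n -cS c1.
Qed.

Lemma trunc_small J : #|J| <= r.-1 -> indep Bs J = indep (trunc Bs r) J.
Proof.
move=> hJ; apply/idP/idP.
  move=> /exists_inP[X hX hJX].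
  have [Y /andP[h1 h2] hY] := ext (k := r.-1) hJX (ltac:(by rewrite hJ (cardB HR hX) leq_pred)).
  apply/exists_inP; exists Y => //; rewrite inE hY eqxx andbT.
  exact: indep_sub (B_indep hX) h2.
by move/exists_inP => [Y]; rewrite inE => /andP[hY _] hJY; exact: indep_sub hY hJY.
Qed.

End Mat.

Section Basics2.
Variables (n r : nat) (Bs : {set {set 'I_n}}).
Hypotheses (HM : is_matroid_bases Bs) (HR : has_rank Bs r).
Implicit Types (J G W : {set 'I_n}).

Lemma maxW J G : J \subset G -> indep Bs J ->
  exists2 W : {set 'I_n}, [&& J \subset W, W \subset G & indep Bs W] &
    forall W' : {set 'I_n}, J \subset W' -> W' \subset G -> indep Bs W' -> #|W'| <= #|W|.
Proof.
move=> hJG hJ.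
pose A := [pred W : {set 'I_n} | [&& J \subset W, W \subset G & indep Bs W]].
have hA : 0 < #|A| by apply/card_gt0P; exists J; rewrite inE subxx hJG hJ.
have [W0 hW0 hmax] := eq_bigmax_cond (fun W : {set 'I_n} => #|W|) hA.
exists W0; first by move: hW0; rewrite inE.
move=> W' h1 h2 h3; rewrite -hmax.
apply: (@leq_bigmax_cond _ (fun W => W \in A) (fun W : {set 'I_n} => #|W|) W').
by rewrite inE h1 h2 h3.
Qed.

Lemma maxL G (G' : {set 'I_n}) J e : G' \subset G -> indep Bs G' ->
  (forall W, W \subset G -> indep Bs W -> #|W| <= #|G'|) ->
  J \subset G -> indep Bs J -> e \notin G -> ~~ indep Bs (e |: J) -> ~~ indep Bs (e |: G').
Proof.
move=> hG'G hG' hmax hJG hJ heG hdep; apply/negP => hi.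
have [Js /and3P[hJJs hJsG hJsi] hmaxJ] := maxW hJG hJ.
have heG' : e \notin G' by apply: contra heG => /(subsetP hG'G).
have c1 : #|Js| <= #|G'| := hmax _ hJsG hJsi.
have c2 : #|G'| <= #|Js|.
  rewrite leqNgt; apply/negP => hlt.
  have [f hf hfi] := augment HM HR hJsi hG' hlt.
  move: hf; rewrite inE => /andP[hfJs hfG'].
  have h2 : f |: Js \subset G by rewrite subUset sub1set (subsetP hG'G f hfG') hJsG.
  have := hmaxJ (f |: Js) (subset_trans hJJs (subsetUr _ _)) h2 hfi.
  by rewrite cardsU1 hfJs add1n ltnn.
have hlt : #|Js| < #|e |: G'| by rewrite cardsU1 heG' add1n ltnS c1.
have [f hf hfi] := augment HM HR hJsi hi hlt.
move: hf; rewrite !inE => /andP[hfJs /orP[/eqP fe|hfG']].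
  move/negP: hdep; apply; apply: indep_sub hfi _; rewrite -fe; exact: setUS.
have h2 : f |: Js \subset G by rewrite subUset sub1set (subsetP hG'G f hfG') hJsG.
have := hmaxJ (f |: Js) (subset_trans hJJs (subsetUr _ _)) h2 hfi.
by rewrite cardsU1 hfJs add1n ltnn.
Qed.

End Basics2.

Section Inj.
Variables (n r : nat) (B1 B2 : {set {set 'I_n}}).
Hypotheses (HM1 : is_matroid_bases B1) (HR1 : has_rank B1 r)
  (HM2 : is_matroid_bases B2) (HR2 : has_rank B2 r) (Hr : 0 < r) (Hrn : r <= n)
  (HT : trunc B1 r = trunc B2 r) (HP : pav B1 r = pav B2 r).

Lemma small_eq (J : {set 'I_n}) : #|J| <= r.-1 -> indep B1 J = indep B2 J.
Proof. by move=> h; rewrite (trunc_small HR1 h) HT -(trunc_small HR2 h). Qed.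

Lemma inj_sub : B1 \subset B2.
Proof.
apply/subsetP => X hX; apply/negPn/negP => hX2.
have cX := cardB HR1 hX.
have : 0 < #|X| by rewrite cX.
case/card_gt0P => x hx.
have cS : #|X :\ x| = r.-1 by move: (cardsD1 x X); rewrite hx cX add1n => ->.
have hS1 : indep B1 (X :\ x) := indep_sub (B_indep hX) (subD1set X x).
have hS2 : indep B2 (X :\ x).
  rewrite -small_eq; first exact: hS1.
  by rewrite cS leqnn.
have hXS : x |: (X :\ x) = X by rewrite setD1K.
have hXdep : ~~ indep B2 X.
  apply/negP => hi; move/negP: hX2; apply. have T1 := @indep_r n r B2 HR2 X hi cX. exact T1.
have hXH : X \subset hcl B2 (X :\ x).
  apply/subsetP => e he; rewrite /hcl in_set.
  case: (boolP (e \in X :\ x)) => heS; first by [].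
  rewrite orFb.
  have -> : e = x by move: heS; rewrite in_setD1 he andbT negbK => /eqP.
  by rewrite hXS.
have [g2 sG mG] := @beta_spec n r B2 HM2 (hcl B2 (X :\ x)).
set S := X :\ x in cS hS1 hS2 hXS hXH g2 sG mG.
set G := beta B2 r (hcl B2 S) in g2 sG mG.
have hG1 : general B1 r G.
  apply/forallP => J; apply/implyP => hJ; apply/implyP => hc.
  rewrite small_eq; first exact: general_indep g2 hJ hc.
  exact: hc.
have hblock : block B2 r G by apply/existsP; exists S; rewrite hS2 cS !eqxx.
have hGr : forall Y : {set 'I_n}, Y \subset G -> #|Y| = r -> Y \notin B1.
  move=> Y hY hYc; apply/negP => hY1.
  have := B_pav HM1 HR1 Hr Hrn hY1; rewrite HP inE hYc eqxx /=.
  by move/forallP/(_ G); rewrite hblock /= hY.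
have recov : forall e, e \in hcl B2 S -> e \notin G ->
   exists2 J : {set 'I_n}, (J \subset G) && (#|J| <= r.-1) & ~~ indep B1 (e |: J).
  move=> e heH heG.
  have : ~~ general B2 r (e |: G).
    apply/negP => hg; have := mG _ hg; rewrite subUset sub1set heH sG => /(_ isT).
    by rewrite cardsU1 heG add1n ltnn.
  case/forallPn => J0; rewrite negb_imply => /andP[hJ0]; rewrite negb_imply => /andP[hc0 hd0].
  have heJ0 : e \in J0.
    apply/negPn/negP => heJ; move/negP: hd0; apply.
    apply: (general_indep g2) hc0; apply/subsetP => z hz.
    have := subsetP hJ0 z hz; rewrite in_setU1 => /orP[/eqP ze|//].
    by move: heJ; rewrite -ze hz.
  exists (J0 :\ e).
    apply/andP; split; last exact: leq_trans (subset_leq_card (subD1set J0 e)) hc0.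
    apply/subsetP => z; rewrite in_setD1 => /andP[hze hz].
    by have := subsetP hJ0 z hz; rewrite in_setU1 (negbTE hze).
  rewrite (setD1K heJ0) small_eq; first exact: hd0.
  exact: hc0.
have [G' /and3P[_ hG'G hG'i] hmaxG'] := maxW (sub0set G) (indep0 HM1).
have hmax' : forall W : {set 'I_n}, W \subset G -> indep B1 W -> #|W| <= #|G'| :=
  fun W h1 h2 => hmaxG' W (sub0set W) h1 h2.
have cG' : #|G'| < r.
  have := indep_card HR1 hG'i; rewrite leq_eqVlt => /orP[/eqP e|//].
  by move: (hGr G' hG'G e); rewrite (indep_r HR1 hG'i e).
have [e he hei] := augment HM1 HR1 hG'i (B_indep hX) (ltac:(by rewrite cX)).
move: he; rewrite inE => /andP[heG' heX].
have heH := subsetP hXH e heX.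
case: (boolP (e \in G)) => heG.
  have := hmax' (e |: G') (ltac:(by rewrite subUset sub1set heG hG'G)) hei.
  by rewrite cardsU1 heG' add1n ltnn.
have [J /andP[hJG hJc] hJd] := recov e heH heG.
have hJi : indep B1 J := general_indep hG1 hJG hJc.
have := maxL HM1 HR1 hG'G hG'i hmax' hJG hJi heG hJd.
by rewrite hei.
Qed.

End Inj.

Theorem lemma4p4 (n r : nat) : 1 <= r -> r <= n ->
  m_count n r <= m_count n r.-1 * p_count n r.
Proof.
move=> Hr Hrn; rewrite /m_count /p_count -cardsX.
set A := [set B : {set {set 'I_n}} | is_matroid_bases B && has_rank B r].
have inj : {in A &, injective (fun B => (trunc B r, pav B r))}.
  move=> B1 B2 hB1 hB2 E.
  have eT : trunc B1 r = trunc B2 r by exact: (congr1 fst E).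
  have eP : pav B1 r = pav B2 r by exact: (congr1 snd E).
  move: hB1 hB2; rewrite !inE => /andP[m1 h1] /andP[m2 h2].
  apply/eqP; rewrite eqEsubset (inj_sub m1 h1 m2 h2 Hr Hrn eT eP).
  by rewrite (inj_sub m2 h2 m1 h1 Hr Hrn (esym eT) (esym eP)).
rewrite -(card_in_imset inj); apply: subset_leq_card.
apply/subsetP => y /imsetP[B hB ->]; move: hB; rewrite inE => /andP[m h].
rewrite in_setX !inE.
by rewrite (trunc_matroid m h Hr) trunc_rank (pav_matroid m h Hr Hrn) pav_rank
  (pav_paving m h Hr Hrn).
Qed.
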